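(* Let $n,k,j,i$ be integers with $n\ge k\ge 1$, $0\le j<n$, $i\ge 1$. Let $f^*_{(n,k)\setminus(j),i}(q)$ be the sum of $q^{\mathrm{maj}(\tau)}$ over standard Young tableaux $\tau$ of skew shape $(n,k)\setminus(j)$ with exactly $i$ descents in which the entry $1$ lies in the top row. Then $$f^*_{(n,k)\setminus(j),i}(q) = q^{i^2}\left( \begin{bmatrix} n-j \\ i \end{bmatrix}_q \begin{bmatrix} k-1 \\ i-1 \end{bmatrix}_q - \begin{bmatrix} n \\ i-1 \end{bmatrix}_q \begin{bmatrix} k-j-1 \\ i \end{bmatrix}_q \right).$$
   Context: The skew shape $(n,k)\setminus(j)$ consists of a top row occupying columns $j+1,\dots,n$ and a bottom row occupying columns $1,\dots,k$. A standard Young tableau of this shape is a filling with $1,\dots,n+k-j$, each used once, increasing along rows left to right and down columns. It has a descent at $m$ if $m+1$ lies in a strictly lower row than $m$; $\mathrm{maj}$ is the sum of the descents. The $q$-binomial coefficient is $\begin{bmatrix} M \\ N \end{bmatrix}_q = \frac{(q)_M}{(q)_N(q)_{M-N}}$ with $(q)_m=(1-q)\cdots(1-q^m)$ when $0\le N\le M$ are integers, and $0$ otherwise. *)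

(* Defs.v *)
From HB Require Import structures.
From mathcomp Require Import all_boot all_order all_algebra.
Set Implicit Arguments. Unset Strict Implicit. Unset Printing Implicit Defensive.
Import Order.TTheory GRing.Theory Num.Theory.

(* A filling of the skew shape (n,k)\(j): the top row has n-j cells
   (top cell p : 'I_(n-j) sits in column j+1+p), the bottom row has k cells
   (bottom cell c : 'I_k sits in column c+1).  Entries are stored 0-based:
   an ordinal u : 'I_(n+k-j) stands for the entry u+1. *)
Definition filling (n k j : nat) : finType :=
  ({ffun 'I_(n - j) -> 'I_(n + k - j)} * {ffun 'I_k -> 'I_(n + k - j)})%type.

Definition topF n k j (t : filling n k j) := t.1.
Definition botF n k j (t : filling n k j) := t.2.

Definition isSYT n k j (t : filling n k j) : bool :=
  let T := topF t in let B := botF t in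
  [&&
      [forall p : 'I_(n - j), forall q : 'I_(n - j),
         (p < q)%N ==> (T p < T q)%N],
      [forall c : 'I_k, forall d : 'I_k, (c < d)%N ==> (B c < B d)%N],
      [forall p : 'I_(n - j), forall c : 'I_k, T p != B c],
      [forall u : 'I_(n + k - j),
         [exists p, T p == u] || [exists c, B c == u]] &
      (* columns increase downwards: same column iff j+1+p = c+1 *)
      [forall p : 'I_(n - j), forall c : 'I_k,
         (j + p == c)%N ==> (T p < B c)%N]].

Definition inTop n k j (t : filling n k j) (m : nat) : bool :=
  [exists p, (nat_of_ord (topF t p)).+1 == m].
Definition inBot n k j (t : filling n k j) (m : nat) : bool :=
  [exists c, (nat_of_ord (botF t c)).+1 == m].

(* descent at m : m+1 lies in a strictly lower row than m *)
Definition isDescent n k j (t : filling n k j) (m : nat) : bool :=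
  inTop t m && inBot t m.+1.

Definition descents n k j (t : filling n k j) : seq nat :=
  [seq m <- iota 1 (n + k - j) | isDescent t m].

Definition maj n k j (t : filling n k j) : nat := \sum_(m <- descents t) m.
Definition ndes n k j (t : filling n k j) : nat := size (descents t).

Local Open Scope ring_scope.

Definition fstar (n k j i : nat) : {poly rat} :=
  \sum_(t : filling n k j | [&& isSYT t, ndes t == i & inTop t 1])
     'X^(maj t).

Definition qpoch (m : nat) : {poly rat} :=
  \prod_(1 <= a < m.+1) (1 - 'X^a).

Definition qbinom (M N : nat) : {poly rat} :=
  if (N <= M)%N then qpoch M %/ (qpoch N * qpoch (M - N)) else 0.

(* Main.v *)
Require Import Defs.
From mathcomp Require Import all_boot all_order all_algebra.
From mathcomp Require Import ring zify.
Set Implicit Arguments. Unset Strict Implicit. Unset Printing Implicit Defensive.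
Import GRing.Theory.
Local Open Scope ring_scope.

Fixpoint gb (m r : nat) : {poly rat} :=
  match m, r with
  | _, 0 => 1
  | 0, _.+1 => 0
  | m'.+1, r'.+1 => gb m' r' + 'X^(r'.+1) * gb m' r'.+1
  end.
Arguments gb : simpl never.

Lemma gbS m r : gb m.+1 r.+1 = gb m r + 'X^(r.+1) * gb m r.+1.
Proof. by []. Qed.

Lemma gb0 m : gb m 0 = 1. Proof. by case: m. Qed.

Lemma gb_small m r : (m < r)%N -> gb m r = 0.
Proof.
elim: m r => [|m IH] [|r] // H.
by rewrite gbS !IH ?mulr0 ?addr0 // ltnW.
Qed.

Lemma gb_diag m : gb m m = 1.
Proof. elim: m => // m IH; by rewrite gbS IH gb_small // mulr0 addr0. Qed.

Lemma qpochS m : qpoch m.+1 = qpoch m * (1 - 'X^(m.+1)).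
Proof. by rewrite /qpoch big_nat_recr. Qed.

Lemma qpoch0 : qpoch 0 = 1.
Proof. by rewrite /qpoch big_geq. Qed.

Lemma qpoch_neq0 m : qpoch m != 0.
Proof.
elim: m => [|m IH]; first by rewrite qpoch0 oner_neq0.
rewrite qpochS mulf_neq0 //.
apply/eqP => /(congr1 (fun p : {poly rat} => p`_0)).
by rewrite coefB coef1 coefXn /= coef0 subr0 => /eqP; rewrite oner_eq0.
Qed.

Lemma gb_prod m r : (r <= m)%N -> gb m r * qpoch r * qpoch (m - r) = qpoch m.
Proof.
elim: m r => [|m IH] [|r] Hr.
- by rewrite gb0 qpoch0 !mul1r.
- by [].
- by rewrite gb0 qpoch0 !mul1r subn0.
rewrite ltnS in Hr.
rewrite subSS gbS mulrDl mulrDl qpochS.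
have E1 : gb m r * (qpoch r * (1 - 'X^(r.+1))) * qpoch (m - r)
          = qpoch m * (1 - 'X^(r.+1)).
  rewrite -(IH r Hr) -!mulrA; congr (_ * _).
  by rewrite [(1 - _) * _]mulrC.
rewrite E1 -qpochS.
case: (ltnP r m) => Hrm.
- have E2 := IH r.+1 Hrm.
  have Ed : (m - r = (m - r.+1).+1)%N by rewrite subnSK.
  rewrite Ed (qpochS (m - r.+1)).
  have -> : 'X^(r.+1) * gb m r.+1 * qpoch r.+1 * (qpoch (m - r.+1) * (1 - 'X^((m - r.+1).+1)))
     = 'X^(r.+1) * (gb m r.+1 * qpoch r.+1 * qpoch (m - r.+1)) * (1 - 'X^((m - r.+1).+1)).
    by rewrite !mulrA.
  rewrite E2 -Ed.
  have Ex : 'X^(r.+1) * 'X^(m - r) = 'X^(m.+1) :> {poly rat}.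
    by rewrite -exprD addSn subnKC.
  rewrite qpochS -Ex; ring.
- have -> : m = r by apply/eqP; rewrite eqn_leq Hr Hrm.
  by rewrite gb_small // mulr0 !mul0r addr0 qpochS.
Qed.

Lemma qbinom_gb M N : qbinom M N = gb M N.
Proof.
rewrite /qbinom; case: ifP => H.
  by rewrite -(gb_prod H) -mulrA mulpK // mulf_neq0 // qpoch_neq0.
by rewrite gb_small // ltnNge H.
Qed.

Lemma gb_sym m r : (r <= m)%N -> gb m r = gb m (m - r).
Proof.
move=> H.
have H1 := gb_prod H.
have H2 := gb_prod (leq_subr r m).
rewrite subKn // in H2.
apply: (mulIf (qpoch_neq0 (m - r))); apply: (mulIf (qpoch_neq0 r)).
by rewrite H2 -mulrA (mulrC (qpoch (m - r))) mulrA H1.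
Qed.

Lemma gbS2 m r : gb m.+1 r.+1 = gb m r.+1 + 'X^(m - r) * gb m r.
Proof.
case: (ltngtP r m) => H.
- have H1 : (r.+1 <= m.+1)%N by rewrite ltnS ltnW.
  rewrite (gb_sym H1) subSS.
  have Ed : (m - r = (m - r.+1).+1)%N by rewrite subnSK.
  rewrite Ed gbS -Ed.
  have H2 : (m - r.+1 <= m)%N by rewrite leq_subr.
  rewrite (gb_sym H2) subKn // -(gb_sym (ltnW H)) addrC.
  done.
- by rewrite !gb_small // ?mulr0 ?addr0 // ltnW.
- by rewrite H subnn gb_diag gb_diag gb_small // add0r expr0 mulr1.
Qed.

Definition Bf (b i : nat) : {poly rat} := if b is b'.+1 then gb b' i.-1 else 0.
Definition Df (j b i : nat) : {poly rat} := if (j < b)%N then gb (b - j.+1) i else 0.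

Definition Phi (j a b i : nat) : {poly rat} :=
  'X^(i ^ 2) * (gb a i * Bf b i - gb (a + j) i.-1 * Df j b i).

Lemma Xgb_eq e1 e2 m r : ((r <= m)%N -> e1 = e2) -> 'X^e1 * gb m r = 'X^e2 * gb m r.
Proof.
case: (leqP r m) => H E; first by rewrite E.
by rewrite gb_small // !mulr0.
Qed.

Lemma Phi_b0 j a i : Phi j a 0 i = 0.
Proof. by rewrite /Phi /Bf /Df /= !mulr0 subrr mulr0. Qed.

Lemma Phi_top j a i : Phi j a (a + j).+1 i = 0.
Proof.
rewrite /Phi /Bf /Df /= ltnS leq_addl subSS.
have -> : (a + j - j = a)%N by rewrite addnK.
by rewrite [gb a i * _]mulrC subrr mulr0.
Qed.

Lemma Phi_a0 j b i : (b <= j.+1)%N -> Phi j 0 b i.+1 = 0.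
Proof.
move=> Hb; rewrite /Phi /Df (gb_small (ltn0Sn i)) mul0r sub0r.
case: ifP => H; last by rewrite mulr0 oppr0 mulr0.
have -> : (b - j.+1 = 0)%N by apply/eqP; rewrite subn_eq0.
by rewrite (gb_small (ltn0Sn i)) mulr0 oppr0 mulr0.
Qed.

Lemma gb_neq0 m r : gb m r != 0 -> (r <= m)%N.
Proof. by case: (leqP r m) => // H; rewrite gb_small // eqxx. Qed.

Lemma Xcomb (e1 e2 e3 f1 f2 : nat) (p q : {poly rat}) :
  (p != 0 -> q != 0 -> (e1 + e2 + e3 = f1 + f2)%N) ->
  'X^e1 * ('X^e2 * p * ('X^e3 * q)) = 'X^f1 * ('X^f2 * (p * q)).
Proof.
have [->|Hp] := eqVneq p 0; first by move=> _; rewrite !(mulr0, mul0r).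
have [->|Hq] := eqVneq q 0; first by move=> _; rewrite !(mulr0, mul0r).
move=> /(_ isT isT) H.
transitivity ('X^(e1 + e2 + e3) * (p * q)); first by rewrite !exprD; ring.
by rewrite H exprD; ring.
Qed.

Lemma dB_eq b i : Bf b.+1 i.+2 - Bf b i.+2 = 'X^(b.-1 - i) * Bf b i.+1.
Proof.
case: b => [|b]; rewrite /Bf /=; first by rewrite subr0 mulr0.
by rewrite gbS2 addrAC subrr add0r.
Qed.

Lemma dD_eq j b i : Df j b.+1 i.+2 - Df j b i.+2 = 'X^(b - j.+1 - i.+1) * Df j b i.+1.
Proof.
rewrite /Df ltnS; case: (ltngtP b j) => H.
- by rewrite subrr mulr0.
- rewrite subSS.
  have -> : (b - j = (b - j.+1).+1)%N by rewrite subnSK.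
  by rewrite gbS2 addrAC subrr add0r.
- by rewrite H subnn gb_small // subr0 mulr0.
Qed.

Lemma Phi_id j a b i :
  Phi j a.+1 b.+1 i.+1 - Phi j a b.+1 i.+1 - Phi j a.+1 b i.+1 + Phi j a b i.+1
  = 'X^(a.+1 + b) * (if i is i'.+1 then Phi j a b i else (b == 0%N)%:R).
Proof.
have E : Phi j a.+1 b.+1 i.+1 - Phi j a b.+1 i.+1 - Phi j a.+1 b i.+1 + Phi j a b i.+1
  = 'X^((i.+1)^2) * ((gb a.+1 i.+1 - gb a i.+1) * (Bf b.+1 i.+1 - Bf b i.+1)
     - (gb (a.+1 + j) i - gb (a + j) i) * (Df j b.+1 i.+1 - Df j b i.+1)).
  by rewrite /Phi /=; ring.
have dA : gb a.+1 i.+1 - gb a i.+1 = 'X^(a - i) * gb a i by rewrite gbS2 addrAC subrr add0r.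
rewrite E dA; clear E.
case: i dA => [|i] dA.
  rewrite !gb0 subrr mul0r subr0 /Bf /=.
  case: b => [|b] /=.
    by rewrite gb0 subr0 !mulr1 addn0 subn0 exp1n -exprD add1n.
  by rewrite !gb0 subrr !mulr0.
rewrite addSn gbS2 addrAC subrr add0r dB_eq dD_eq /Phi.
have T1 : 'X^((i.+2)^2) * ('X^(a - i.+1) * gb a i.+1 * ('X^(b.-1 - i) * Bf b i.+1))
   = 'X^(a.+1 + b) * ('X^((i.+1)^2) * (gb a i.+1 * Bf b i.+1)).
  apply: Xcomb => /gb_neq0 H1; rewrite /Bf; case: b => [|b]; first by rewrite eqxx.
  move=> /gb_neq0 /= H2; lia.
have T2 : 'X^((i.+2)^2) * ('X^(a + j - i) * gb (a + j) i * ('X^(b - j.+1 - i.+1) * Df j b i.+1))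
   = 'X^(a.+1 + b) * ('X^((i.+1)^2) * (gb (a + j) i * Df j b i.+1)).
  apply: Xcomb => /gb_neq0 H1; rewrite /Df; case: ifP => H2; last by rewrite eqxx.
  move=> /gb_neq0 /= H3; lia.
by rewrite mulrBr T1 T2 -!mulrBr.
Qed.
Fixpoint allw (N : nat) : seq (seq bool) :=
  if N is N'.+1 then flatten [seq [:: rcons w true; rcons w false] | w <- allw N']
  else [:: [::]].

Lemma mem_allw N w : (w \in allw N) = (size w == N).
Proof.
elim: N w => [|N IH] w /=; first by rewrite inE size_eq0.
apply/flattenP/idP.
- case=> s /mapP [w' Hw' ->]; rewrite !inE => /orP [] /eqP ->;
  by rewrite size_rcons eqSS -IH.
- case/lastP: w => [|w x] //; rewrite size_rcons eqSS -IH => Hw.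
  exists [:: rcons w true; rcons w false]; first by apply/mapP; exists w.
  by case: x; rewrite !inE eqxx ?orbT.
Qed.

Lemma uniq_allw N : uniq (allw N).
Proof.
elim: N => [|N IH] //=.
elim: (allw N) IH => [|w s IHs] //= /andP [Hw Hs].
have Hm : forall x, rcons w x \notin flatten [seq [:: rcons w0 true; rcons w0 false] | w0 <- s].
  move=> x; apply/negP => /flattenP [t /mapP [w' Hw' ->]].
  by rewrite !inE => /orP [] /eqP /rcons_inj [] E _; rewrite E Hw' in Hw.
rewrite IHs // in_cons negb_or !Hm !andbT.
by apply/eqP => /rcons_inj [].
Qed.

Lemma sum_allwS N (P : pred (seq bool)) (F : seq bool -> {poly rat}) :
  \sum_(w <- allw N.+1 | P w) F w =
  \sum_(w <- allw N) ((if P (rcons w true) then F (rcons w true) else 0)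
                      + (if P (rcons w false) then F (rcons w false) else 0)).
Proof.
rewrite big_mkcond /= big_flatten big_map /=.
by apply: eq_bigr => w _; rewrite !big_cons big_nil addr0.
Qed.

Definition posT (w : seq bool) : seq nat := [seq u <- iota 0 (size w) | nth false w u].
Definition posB (w : seq bool) : seq nat := [seq u <- iota 0 (size w) | ~~ nth false w u].

Definition ballotPQ (j : nat) (P Q : seq nat) : bool :=
  all (fun c => (j <= c)%N ==> ((c - j < size P)%N && (nth 0%N P (c - j) < nth 0%N Q c)%N))
      (iota 0 (size Q)).
Definition ballot j w := ballotPQ j (posT w) (posB w).

Definition dl (d : bool) (w : seq bool) : seq nat :=
  [seq m <- iota 1 (size w) | nth false w m.-1 && ~~ nth d w m].
Definition majw w : nat := (\sum_(m <- dl true w) m)%N.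
Definition desw w : nat := size (dl true w).

Lemma iotaS1 m n : iota m n.+1 = rcons (iota m n) (m + n)%N.
Proof. by rewrite -addn1 iotaD cats1. Qed.

Lemma posT_rcons w x :
  posT (rcons w x) = if x then rcons (posT w) (size w) else posT w.
Proof.
rewrite /posT size_rcons iotaS1 filter_rcons add0n nth_rcons ltnn eqxx.
congr (if _ then rcons _ _ else _); apply: eq_in_filter => u;
  by rewrite mem_iota add0n => /andP [_ H]; rewrite nth_rcons H.
Qed.

Lemma posB_rcons w x :
  posB (rcons w x) = if ~~ x then rcons (posB w) (size w) else posB w.
Proof.
rewrite /posB size_rcons iotaS1 filter_rcons add0n nth_rcons ltnn eqxx.
congr (if _ then rcons _ _ else _); apply: eq_in_filter => u;
  by rewrite mem_iota add0n => /andP [_ H]; rewrite nth_rcons H.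
Qed.

Lemma size_posT w : size (posT w) = count id w.
Proof.
rewrite /posT size_filter -[in RHS](mkseq_nth false w) /mkseq count_map.
by apply: eq_count.
Qed.

Lemma size_posB w : size (posB w) = count negb w.
Proof.
rewrite /posB size_filter -[in RHS](mkseq_nth false w) /mkseq count_map.
by apply: eq_count.
Qed.

Lemma posT_lt w u : u \in posT w -> (u < size w)%N.
Proof. by rewrite mem_filter mem_iota add0n => /andP [_ /andP [_ ->]]. Qed.
Lemma posB_lt w u : u \in posB w -> (u < size w)%N.
Proof. by rewrite mem_filter mem_iota add0n => /andP [_ /andP [_ ->]]. Qed.

Lemma ballotPQ_rconsP j P Q N : (forall c, c \in Q -> (c < N)%N) ->
  ballotPQ j (rcons P N) Q = ballotPQ j P Q.
Proof.
move=> HQ; apply: eq_in_all => c; rewrite mem_iota add0n => /andP [_ Hc].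
case: (j <= c)%N => //=.
rewrite size_rcons nth_rcons ltnS leq_eqVlt.
case: ltngtP => //= E.
have := HQ _ (mem_nth 0%N Hc).
by move=> H; apply/negbTE; rewrite -leqNgt ltnW.
Qed.

Lemma ballotPQ_rconsQ j P Q N : (forall c, c \in P -> (c < N)%N) ->
  ballotPQ j P (rcons Q N) = ballotPQ j P Q && ((j <= size Q) ==> (size Q - j < size P))%N.
Proof.
move=> HP; rewrite /ballotPQ size_rcons iotaS1 all_rcons add0n andbC.
congr andb.
  apply: eq_in_all => c; rewrite mem_iota add0n => /andP [_ Hc].
  by rewrite nth_rcons Hc.
rewrite nth_rcons ltnn eqxx.
case: (j <= size Q)%N => //=.
case H: (size Q - j < size P)%N => //=.
exact: HP (mem_nth 0%N H).
Qed.

Lemma ballot_rcons_true j w : ballot j (rcons w true) = ballot j w.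
Proof.
rewrite /ballot posT_rcons posB_rcons /=.
apply: ballotPQ_rconsP => c; exact: posB_lt.
Qed.

Lemma ballot_rcons_false j w : ballot j (rcons w false) =
  ballot j w && (count negb w < count id w + j)%N.
Proof.
rewrite /ballot posT_rcons posB_rcons /= ballotPQ_rconsQ; last by move=> c; exact: posT_lt.
rewrite size_posT size_posB; congr andb.
case: leqP => /= H; lia.
Qed.

Lemma dl_rcons d w x :
  dl d (rcons w x) = if x && ~~ d then rcons (dl x w) (size w).+1 else dl x w.
Proof.
rewrite /dl size_rcons iotaS1 filter_rcons add1n /= nth_rcons ltnn eqxx.
rewrite (nth_default d) ?size_rcons //.
have Hf : {in iota 1 (size w), (fun m => nth false (rcons w x) m.-1 && ~~ nth d (rcons w x) m)
   =1 (fun m => nth false w m.-1 && ~~ nth x w m)}.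
  move=> u; rewrite mem_iota add1n ltnS => /andP [H1 H2] /=.
  rewrite nth_rcons (leq_trans _ H2) ?ltn_predL //.
  rewrite nth_rcons; case: ltngtP H2 => // E _.
    by congr (_ && ~~ _); apply: set_nth_default.
  by rewrite [nth x w _]nth_default // E.
by rewrite !(eq_in_filter Hf).
Qed.

Lemma dl_true_rcons w x :
  dl true (rcons w x) = if last false w && ~~ x then rcons (dl true w) (size w) else dl true w.
Proof.
rewrite dl_rcons andbF.
case/lastP: w => [|w y]; first by rewrite /dl.
by rewrite !dl_rcons last_rcons andbF size_rcons.
Qed.

Definition Wp j a i w := [&& count id w == a, head false w, ballot j w & desw w == i].
Definition Fg j a b i : {poly rat} := \sum_(w <- allw (a + b)%N | Wp j a i w) 'X^(majw w).
Definition Pg j a b i : {poly rat} :=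
  \sum_(w <- allw (a + b)%N | Wp j a i w && last false w) 'X^(majw w).
Definition Qg j a b i : {poly rat} :=
  \sum_(w <- allw (a + b)%N | Wp j a i w && ~~ last false w) 'X^(majw w).

Lemma count_rcons (p : pred bool) w x : count p (rcons w x) = (count p w + p x)%N.
Proof. by rewrite -cats1 count_cat /= addn0. Qed.

Lemma desw_rcons w x : desw (rcons w x) = (desw w + (last false w && ~~ x))%N.
Proof.
rewrite /desw dl_true_rcons; case: ifP => _; last by rewrite addn0.
by rewrite size_rcons addn1.
Qed.

Lemma majw_rcons w x :
  majw (rcons w x) = (majw w + (if last false w && ~~ x then size w else 0))%N.
Proof.
rewrite /majw dl_true_rcons; case: ifP => _; last by rewrite addn0.
by rewrite big_rcons.
Qed.

Lemma head_rcons_false w : head false (rcons w false) = head false w.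
Proof. by case: w. Qed.

Lemma head_rcons_true w : w != [::] -> head false (rcons w true) = head false w.
Proof. by case: w. Qed.

Lemma count0_head w : count id w = 0%N -> head false w = false.
Proof. by case: w => [|[] w]. Qed.

Lemma FPQ j a b i : Fg j a b i = Pg j a b i + Qg j a b i.
Proof. by rewrite /Fg (bigID (fun w => last false w)). Qed.

Lemma PgS j a b i : (0 < a)%N -> Pg j a.+1 b i = Fg j a b i.
Proof.
move=> Ha; rewrite /Pg /Fg addSn sum_allwS [RHS]big_mkcond.
apply: eq_bigr => w _; rewrite !last_rcons andbF addr0 andbT.
case: w => [|x w].
  by rewrite /Wp /= !andbF; case: a Ha.
rewrite majw_rcons andbF addn0 /Wp desw_rcons andbF addn0.
by rewrite head_rcons_true // ballot_rcons_true count_rcons addn1 eqSS.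
Qed.

Lemma Pg1 j b i : Pg j 1 b i = ((b == 0%N) && (i == 0%N))%:R.
Proof.
case: b => [|b].
  rewrite /Pg /= !big_cons big_nil /= /Wp /=.
  have -> : desw [:: true] = 0%N by [].
  rewrite /majw /dl /= big_nil expr0 addr0 andbT eq_sym.
  by case: (i == 0%N).
rewrite /Pg add1n sum_allwS big1_seq // => w /andP [_]; rewrite mem_allw => /eqP Hw.
rewrite !last_rcons andbF addr0 andbT /Wp count_rcons addn1 eqSS.
case: (eqVneq (count id w) 0%N) => //= H.
rewrite head_rcons_true ?count0_head //.
by apply/eqP => E; rewrite E in Hw.
Qed.

Lemma Qg0 j a i : (0 < a)%N -> Qg j a 0 i = 0.
Proof.
case: a => // a _.
rewrite /Qg addn0 sum_allwS big1_seq // => w /andP [_]; rewrite mem_allw => /eqP Hw.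
rewrite !last_rcons andbF andbT /Wp count_rcons addn0.
suff -> : (count id w == a.+1) = false by rewrite addr0.
apply/negbTE; rewrite neq_ltn -Hw ltnS; apply/orP; left.
exact: count_size.
Qed.

Lemma QgS j a b i : (0 < a)%N ->
  Qg j a b.+1 i = if (b.+1 <= a + j)%N
                  then Qg j a b i + (if i is i'.+1 then 'X^(a + b) * Pg j a b i' else 0)
                  else 0.
Proof.
move=> Ha; rewrite /Qg addnS sum_allwS.
have Hc : forall w, w \in allw (a + b) -> count id w = a -> count negb w = b.
  move=> w; rewrite mem_allw => /eqP Hw Hca.
  by have := count_predC id w; rewrite Hca Hw => /eqP; rewrite eqn_add2l => /eqP.
case: ifP => Hab.
- have E2 : (if i is i'.+1 then 'X^(a + b) * Pg j a b i' else 0) = \sum_(w <- allw (a + b))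
     (if i is i'.+1 then (if Wp j a i' w && last false w then 'X^(a + b) * 'X^(majw w) else 0) else 0).
    case: i => [|i]; first by rewrite big1.
    rewrite /Pg mulr_sumr big_mkcond; apply: eq_bigr => w _; case: ifP => //; by rewrite mulr0.
  rewrite E2 [in RHS]big_mkcond -big_split /=; clear E2.
    apply: eq_big_seq => w Hw.
    rewrite !last_rcons andbF andbT add0r.
    rewrite /Wp count_rcons addn0 head_rcons_false ballot_rcons_false desw_rcons majw_rcons andbT.
    case: (eqVneq (count id w) a) => Hca /=; last by case: i => [|i] //=; rewrite addr0.
    rewrite (Hc w Hw Hca) Hca.
    have -> : (b < a + j)%N by [].
    rewrite andbT.
    case: (last false w) => /=.
      have Hs : size w = (a + b)%N by apply/eqP; rewrite -mem_allw.
      rewrite Hs andbF add0r addn1.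
      case: i => [|i] /=; first by rewrite !andbF.
      by rewrite andbT eqSS exprD mulrC; case: ifP.
    rewrite !addn0 andbT.
    by case: i => [|i] /=; rewrite ?andbF ?addr0.
- rewrite big1_seq // => w /andP [_ Hw].
  rewrite !last_rcons andbF andbT add0r /Wp count_rcons addn0 ballot_rcons_false.
  case: (eqVneq (count id w) a) => Hca //=.
  by rewrite (Hc w Hw Hca) Hca Hab andbF /= andbF.
Qed.

Lemma Fg_over j a b i : (0 < a)%N -> (a + j < b)%N -> Fg j a b i = 0.
Proof.
case: b => [|b]; first by rewrite ltn0.
elim: a => [//|a IH] _ H.
rewrite FPQ QgS // leqNgt H addr0.
case: a IH H => [|a] IH H; first by rewrite Pg1 andFb.
by rewrite PgS // IH // (leq_trans _ H).
Qed.

Lemma Qg_i0 j a b : (0 < a)%N -> Qg j a b 0 = 0.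
Proof.
move=> Ha; elim: b => [|b IH]; first exact: Qg0.
by rewrite QgS // IH addr0; case: ifP.
Qed.

Lemma Pg_i0 j a b : (0 < a)%N -> Pg j a b 0 = (b == 0%N)%:R.
Proof.
elim: a => [//|a IH] _.
case: a IH => [|a] IH; first by rewrite Pg1 andbT.
by rewrite PgS // FPQ Qg_i0 // addr0 IH.
Qed.

Lemma Pg_b0 j a i : (0 < a)%N -> (0 < i)%N -> Pg j a 0 i = 0.
Proof.
move=> + Hi; elim: a => [//|a IH] _.
case: a IH => [|a] IH; first by rewrite Pg1 eqxx /= eqn0Ngt Hi.
by rewrite PgS // FPQ Qg0 // addr0 IH.
Qed.

Lemma Fg_Phi j b : forall a i, (0 < a)%N -> (0 < i)%N -> (b <= a + j.+1)%N ->
  Fg j a b i = Phi j a b i.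
Proof.
elim: b => [|b IH] a i Ha Hi Hb.
  by rewrite FPQ Qg0 // Pg_b0 // addr0 Phi_b0.
have PgPhi : forall a' i', (0 < i')%N -> (b <= a' + j.+1)%N -> Pg j a'.+1 b i' = Phi j a' b i'.
  move=> [|a'] i' Hi' Hb'.
    by rewrite Pg1; case: i' Hi' => // i' _; rewrite andbF Phi_a0.
  by rewrite PgS // IH.
case: i Hi => [//|i0] _.
have HE0 : forall a', (b <= a' + j.+1)%N ->
   Pg j a'.+1 b i0 = (if i0 is i1.+1 then Phi j a' b i0 else (b == 0%N)%:R).
  move=> a' Ha'; case: i0 => [|i1]; first by rewrite Pg_i0.
  by rewrite PgPhi.
elim: a Ha Hb => [//|a IHa] _ Hb.
case: (leqP b.+1 (a.+1 + j)) => H.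
- rewrite FPQ QgS // H.
  have HP : Pg j a.+1 b.+1 i0.+1 = Phi j a b.+1 i0.+1.
    case: a IHa Hb H => [|a] IHa Hb H.
      by rewrite Pg1 andbF Phi_a0.
    rewrite PgS // IHa //; lia.
  have HQ : Qg j a.+1 b i0.+1 = Phi j a.+1 b i0.+1 - Phi j a b i0.+1.
    rewrite -(IH a.+1 i0.+1) // -?PgPhi //; try lia.
    by rewrite FPQ addrC addKr.
  rewrite HP HQ (HE0 a); last lia. have E := Phi_id j a b i0. rewrite -E. ring.
- have Eb : b = (a.+1 + j)%N by lia.
  rewrite Eb Fg_over // Phi_top //.
Qed.
Section Fill.
Variables n k j : nat.
Local Notation N := (n + k - j)%N.
Local Notation F := (filling n k j).

Lemma SYTP (t : F) : isSYT t ->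
  [/\ (forall p q : 'I_(n - j), (p < q)%N -> (topF t p < topF t q)%N),
      (forall c d : 'I_k, (c < d)%N -> (botF t c < botF t d)%N),
      (forall p c, topF t p != botF t c),
      (forall u : 'I_N, (exists p, topF t p = u) \/ (exists c, botF t c = u)) &
      (forall (p : 'I_(n - j)) (c : 'I_k), (j + p)%N = c -> (topF t p < botF t c)%N)].
Proof.
case/and5P => /forallP H1 /forallP H2 /forallP H3 /forallP H4 /forallP H5; split.
- by move=> p q; move/forallP: (H1 p) => /(_ q) /implyP.
- by move=> p q; move/forallP: (H2 p) => /(_ q) /implyP.
- by move=> p c; move/forallP: (H3 p) => /(_ c).
- move=> u; case/orP: (H4 u) => /existsP [x /eqP E]; [left | right]; by exists x.
- by move=> p c E; move/forallP: (H5 p) => /(_ c) /implyP; apply; apply/eqP.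
Qed.

Definition fw (t : F) : seq bool := [seq inTop t u.+1 | u <- iota 0 N].

Lemma size_fw (t : F) : size (fw t) = N.
Proof. by rewrite size_map size_iota. Qed.

Lemma nth_fw (t : F) u : (u < N)%N -> nth false (fw t) u = [exists p, nat_of_ord (topF t p) == u].
Proof.
move=> Hu; rewrite (nth_map 0%N) ?size_iota // nth_iota // add0n /inTop.

Qed.

Lemma inTop_ex (t : F) u : inTop t u.+1 = [exists p, nat_of_ord (topF t p) == u].
Proof. by apply: eq_existsb => p; rewrite eqSS. Qed.

Lemma inBot_ex (t : F) u : inBot t u.+1 = [exists c, nat_of_ord (botF t c) == u].
Proof. by apply: eq_existsb => p; rewrite eqSS. Qed.

Lemma inBot_not (t : F) u : isSYT t -> (u < N)%N -> inBot t u.+1 = ~~ inTop t u.+1.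
Proof.
case/SYTP => _ _ H3 H4 _ Hu; rewrite inBot_ex inTop_ex.
case: (H4 (Ordinal Hu)) => [[p Hp] | [c Hc]].
- have -> : [exists p, nat_of_ord (topF t p) == u] by apply/existsP; exists p; rewrite Hp.
  apply/existsP => [[c /eqP Hc]]; move/negP: (H3 p c); apply; apply/eqP/val_inj.
  by rewrite /= Hp Hc.
- have -> : [exists c, nat_of_ord (botF t c) == u] by apply/existsP; exists c; rewrite Hc.
  apply/esym/negP => /existsP [p /eqP Hp]; move/negP: (H3 p c); apply; apply/eqP/val_inj.
  by rewrite /= Hp Hc.
Qed.

Lemma inBot_N (t : F) : inBot t N.+1 = false.
Proof.
rewrite inBot_ex; apply/existsP => [[c /eqP Hc]].
by have := ltn_ord (botF t c); rewrite Hc ltnn.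
Qed.

Lemma sorted_mapord m (f : 'I_m -> nat) :
  (forall p q : 'I_m, (p < q)%N -> (f p < f q)%N) -> sorted ltn [seq f p | p <- enum 'I_m].
Proof.
move=> Hf; rewrite sorted_map.
have : sorted ltn [seq nat_of_ord p | p <- enum 'I_m] by rewrite val_enum_ord iota_ltn_sorted.
rewrite sorted_map; apply: sub_sorted => p q /=; exact: Hf.
Qed.

Lemma nth_mapord m (f : 'I_m -> nat) (p : 'I_m) : nth 0%N [seq f q | q <- enum 'I_m] p = f p.
Proof.
rewrite (nth_map p) ?size_enum_ord //; congr f; apply: val_inj => /=.
by rewrite nth_enum_ord.
Qed.

Definition sT (t : F) := [seq nat_of_ord (topF t p) | p <- enum 'I_(n - j)].
Definition sB (t : F) := [seq nat_of_ord (botF t c) | c <- enum 'I_k].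

Lemma posT_fw (t : F) : isSYT t -> posT (fw t) = sT t.
Proof.
move=> H; have [H1 H2 H3 H4 H5] := SYTP H.
apply: (irr_sorted_eq ltn_trans ltnn).
- exact/sorted_filter/iota_ltn_sorted/ltn_trans.
- exact: sorted_mapord.
move=> u; rewrite mem_filter mem_iota add0n size_fw /=.
apply/andP/mapP => [[Hn Hu] | [p _ ->]].
- by rewrite nth_fw // in Hn; case/existsP: Hn => p /eqP <-; exists p; rewrite ?mem_enum.
- have Hp : (topF t p < N)%N by [].
  by rewrite nth_fw //; split => //; apply/existsP; exists p.
Qed.

Lemma posB_fw (t : F) : isSYT t -> posB (fw t) = sB t.
Proof.
move=> H; have [H1 H2 H3 H4 H5] := SYTP H.
apply: (irr_sorted_eq ltn_trans ltnn).
- exact/sorted_filter/iota_ltn_sorted/ltn_trans.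
- exact: sorted_mapord.
move=> u; rewrite mem_filter mem_iota add0n size_fw /=.
apply/andP/mapP => [[Hn Hu] | [c _ ->]].
- rewrite nth_fw // -inTop_ex -inBot_not // inBot_ex in Hn.
  by case/existsP: Hn => c /eqP <-; exists c; rewrite ?mem_enum.
- have Hc : (botF t c < N)%N by [].
  rewrite nth_fw // -inTop_ex -inBot_not // inBot_ex; split => //.
  by apply/existsP; exists c.
Qed.

Hypothesis Hjn : (j < n)%N.
Hypothesis Hkn : (k <= n)%N.

Lemma count_fw (t : F) : isSYT t -> count id (fw t) = (n - j)%N.
Proof. by move=> H; rewrite -size_posT posT_fw // size_map size_enum_ord. Qed.

Lemma countB_fw (t : F) : isSYT t -> count negb (fw t) = k.
Proof. by move=> H; rewrite -size_posB posB_fw // size_map size_enum_ord. Qed.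

Lemma ballot_fw (t : F) : isSYT t -> ballot j (fw t).
Proof.
move=> H; have [H1 H2 H3 H4 H5] := SYTP H.
rewrite /ballot posT_fw // posB_fw //; apply/allP => c.
rewrite size_map size_enum_ord mem_iota add0n => /andP [_ hc].
apply/implyP => hjc.
have hp : (c - j < n - j)%N by lia.
rewrite size_map size_enum_ord hp /=.
have := nth_mapord (fun q => nat_of_ord (topF t q)) (Ordinal hp) => /= ->.
have := nth_mapord (fun q => nat_of_ord (botF t q)) (Ordinal hc) => /= ->.
apply: H5 => /=; lia.
Qed.

Lemma head_fw (t : F) : head false (fw t) = inTop t 1.
Proof.
have hN : (0 < N)%N by lia.
by rewrite -nth0 nth_fw // inTop_ex.
Qed.

Lemma dl_fw (t : F) : isSYT t -> dl true (fw t) = descents t.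
Proof.
move=> H; rewrite /dl /descents size_fw; apply: eq_in_filter => m.
rewrite mem_iota add1n ltnS => /andP [h1 h2].
case: m h1 h2 => [//|m] _ h2 /=.
rewrite /isDescent nth_fw // -inTop_ex; congr andb.
case: (ltngtP m.+1 N) h2 => // E _.
- by rewrite (set_nth_default false) ?size_fw // nth_fw // -inTop_ex inBot_not.
- by rewrite E inBot_N nth_default ?size_fw.
Qed.

Lemma ndes_fw (t : F) : isSYT t -> ndes t = desw (fw t).
Proof. by move=> H; rewrite /ndes /desw dl_fw. Qed.

Lemma maj_fw (t : F) : isSYT t -> maj t = majw (fw t).
Proof. by move=> H; rewrite /maj /majw dl_fw. Qed.

Definition goodw (w : seq bool) := [&& size w == N, count id w == (n - j)%N & ballot j w].

Definition psi (d : 'I_N) (w : seq bool) : F :=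
  ([ffun p : 'I_(n - j) => insubd d (nth 0%N (posT w) p)], [ffun c : 'I_k => insubd d (nth 0%N (posB w) c)]).

Lemma countB_good w : goodw w -> count negb w = k.
Proof.
case/and3P => /eqP hs /eqP hc _.
have E : (count id w + count negb w = size w)%N by rewrite -(count_predC id w).
rewrite hs hc in E; lia.
Qed.

Lemma val_psiT d w (p : 'I_(n - j)) : goodw w -> nat_of_ord (topF (psi d w) p) = nth 0%N (posT w) p.
Proof.
move=> G; have /and3P [/eqP hs /eqP hc _] := G.
rewrite /psi /topF /= ffunE val_insubd.
have hp : (p < size (posT w))%N by rewrite size_posT hc.
have Hl : (nth 0%N (posT w) p < N)%N by rewrite -hs; apply: posT_lt; apply: mem_nth.
by rewrite Hl.
Qed.

Lemma val_psiB d w (c : 'I_k) : goodw w -> nat_of_ord (botF (psi d w) c) = nth 0%N (posB w) c.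
Proof.
move=> G; have /and3P [/eqP hs _ _] := G.
rewrite /psi /botF /= ffunE val_insubd.
have hp : (c < size (posB w))%N by rewrite size_posB countB_good.
have Hl : (nth 0%N (posB w) c < N)%N by rewrite -hs; apply: posB_lt; apply: mem_nth.
by rewrite Hl.
Qed.

Lemma sorted_posT w : sorted ltn (posT w).
Proof. exact/sorted_filter/iota_ltn_sorted/ltn_trans. Qed.
Lemma sorted_posB w : sorted ltn (posB w).
Proof. exact/sorted_filter/iota_ltn_sorted/ltn_trans. Qed.

Lemma mem_posT w u : (u \in posT w) = (u < size w)%N && nth false w u.
Proof. by rewrite mem_filter mem_iota add0n andbC. Qed.
Lemma mem_posB w u : (u \in posB w) = (u < size w)%N && ~~ nth false w u.
Proof. by rewrite mem_filter mem_iota add0n andbC. Qed.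

Lemma psi_SYT d w : goodw w -> isSYT (psi d w).
Proof.
move=> G; have /and3P [/eqP hs /eqP hc hb] := G.
have hcb := countB_good G.
have sT' : size (posT w) = (n - j)%N by rewrite size_posT.
have sB' : size (posB w) = k by rewrite size_posB.
apply/and5P; split.
- apply/forallP => p; apply/forallP => q; apply/implyP => hpq.
  rewrite !val_psiT //; apply: (sorted_ltn_nth ltn_trans) => //;
  by rewrite ?sorted_posT // inE sT'.
- apply/forallP => p; apply/forallP => q; apply/implyP => hpq.
  rewrite !val_psiB //; apply: (sorted_ltn_nth ltn_trans) => //;
  by rewrite ?sorted_posB // inE sB'.
- apply/forallP => p; apply/forallP => c; apply/negP => /eqP E.
  have := congr1 (@nat_of_ord _) E; rewrite val_psiT // val_psiB // => E2.
  have hT : nth 0%N (posT w) p \in posT w by apply: mem_nth; rewrite sT'.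
  have hB : nth 0%N (posB w) c \in posB w by apply: mem_nth; rewrite sB'.
  rewrite mem_posT E2 in hT; rewrite mem_posB in hB.
  by case/andP: hT => _ hT; case/andP: hB => _; rewrite hT.
- apply/forallP => u.
  case hu : (nth false w u).
  + have hm : nat_of_ord u \in posT w by rewrite mem_posT hs ltn_ord hu.
    have hi : (index (nat_of_ord u) (posT w) < size (posT w))%N by rewrite index_mem.
    rewrite sT' in hi.
    apply/orP; left; apply/existsP; exists (Ordinal hi).
    by apply/eqP/val_inj => /=; rewrite val_psiT // nth_index.
  + have hm : nat_of_ord u \in posB w by rewrite mem_posB hs ltn_ord hu.
    have hi : (index (nat_of_ord u) (posB w) < size (posB w))%N by rewrite index_mem.
    rewrite sB' in hi.
    apply/orP; right; apply/existsP; exists (Ordinal hi).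
    by apply/eqP/val_inj => /=; rewrite val_psiB // nth_index.
- apply/forallP => p; apply/forallP => c; apply/implyP => /eqP E.
  rewrite val_psiT // val_psiB //.
  move/allP: hb => /(_ c); rewrite mem_iota add0n sB' ltn_ord => /(_ isT).
  have -> : (j <= c)%N by rewrite -E leq_addr.
  have -> : (c - j = p)%N by rewrite -E addKn.
  by case/andP.
Qed.
Lemma fw_psi d w : goodw w -> fw (psi d w) = w.
Proof.
move=> G; have /and3P [/eqP hs /eqP hc hb] := G.
have sT' : size (posT w) = (n - j)%N by rewrite size_posT.
apply: (@eq_from_nth _ false); first by rewrite size_fw hs.
move=> u; rewrite size_fw => hu; rewrite nth_fw //.
apply/existsP/idP => [[p /eqP <-] | hw].
- rewrite val_psiT //.
  have : nth 0%N (posT w) p \in posT w by apply: mem_nth; rewrite sT'.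
  by rewrite mem_posT => /andP [].
- have hm : u \in posT w by rewrite mem_posT hs hu.
  have hi : (index u (posT w) < size (posT w))%N by rewrite index_mem.
  rewrite sT' in hi.
  by exists (Ordinal hi); rewrite val_psiT //= nth_index.
Qed.

Lemma psi_fw d (t : F) : isSYT t -> psi d (fw t) = t.
Proof.
move=> H; case: t H => T B H.
rewrite /psi posT_fw // posB_fw //; congr pair; apply/ffunP => p; rewrite ffunE.
- by rewrite /sT nth_mapord valKd.
- by rewrite /sB nth_mapord valKd.
Qed.

Lemma good_fw (t : F) : isSYT t -> goodw (fw t).
Proof. by move=> H; rewrite /goodw size_fw eqxx count_fw // eqxx ballot_fw. Qed.
Lemma fstar_Fg i : fstar n k j i = Fg j (n - j) k i.
Proof.
have hN : (0 < N)%N by lia.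
pose d := Ordinal hN.
pose G (w : seq bool) : {poly rat} := if (desw w == i) && head false w then 'X^(majw w) else 0.
have EN : (n - j + k = N)%N by lia.
rewrite /fstar big_mkcondr.
rewrite (eq_bigr (fun t => G (fw t))); last first.
  by move=> t Ht; rewrite /G ndes_fw // maj_fw // head_fw.
rewrite -big_image.
rewrite (perm_big [seq w <- allw (n - j + k) | goodw w]); last first.
  apply: uniq_perm.
  - rewrite map_inj_in_uniq ?enum_uniq // => x y Hx Hy E.
    rewrite mem_enum in Hx; rewrite mem_enum in Hy.
    by rewrite -(psi_fw d Hx) -(psi_fw d Hy) E.
  - by rewrite filter_uniq // uniq_allw.
  move=> w; rewrite mem_filter mem_allw EN.
  apply/mapP/andP => [[t Ht ->] | [Hg Hs]].
    rewrite mem_enum in Ht; split; last by rewrite size_fw.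
    exact: good_fw.
  exists (psi d w); last by rewrite fw_psi.
  by rewrite mem_enum; apply: psi_SYT.
rewrite big_filter /Fg big_mkcond [RHS]big_mkcond.
apply: eq_big_seq => w; rewrite mem_allw EN => Hs.
rewrite /goodw Hs /Wp /G.
by case: (count id w == _); case: (head false w); case: (ballot j w); case: (desw w == i).
Qed.
End Fill.

Unset Implicit Arguments.

Theorem mainTheorem4 (n k j i : nat) :
  (1 <= k)%N -> (k <= n)%N -> (j < n)%N -> (1 <= i)%N ->
  fstar n k j i =
  'X^(i ^ 2) *
    (qbinom (n - j) i * qbinom (k - 1) (i - 1)
     - qbinom n (i - 1) * qbinom (k - j - 1) i).
Proof.
move=> Hk Hkn Hjn Hi.
rewrite fstar_Fg // Fg_Phi; try lia.
rewrite /Phi !qbinom_gb subnK ?(ltnW Hjn) // subn1 /Bf /Df.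
case: k Hk Hkn => [//|k] _ Hkn.
rewrite subn1 /=.
case: ifP => H; first by rewrite subnS subn1.
have -> : (k.+1 - j - 1 = 0)%N by lia.
by rewrite (gb_small (m := 0%N)).
Qed.
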